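(* For every $g\ge 1$, the orientation $\mathcal{H}_g^e$ is a Pfaffian orientation of $\mathcal{H}_g$; that is, every nice cycle of $\mathcal{H}_g$ is oddly oriented relative to $\mathcal{H}_g^e$.
   Context: The graphs $\mathcal{H}_g$ with four hub vertices $v_1,v_2,v_3,v_4$ and orientations $\mathcal{H}_g^e$ are defined recursively. $\mathcal{H}_1$ is the 4-cycle with edges $\{v_1,v_2\},\{v_1,v_3\},\{v_2,v_4\},\{v_3,v_4\}$, and $\mathcal{H}_1^e$ orients them as $v_1\to v_2$, $v_1\to v_3$, $v_4\to v_2$, $v_3\to v_4$. For $g>1$, take four disjoint copies $\mathcal{H}_{g-1}^{(i)}$, $i=1,2,3,4$, of $\mathcal{H}_{g-1}$, each oriented as a copy of $\mathcal{H}_{g-1}^e$, with hubs $v_k^{(i)}$ corresponding to $v_k$; identify $v_1^{(1)}$ and $v_1^{(4)}$ as the hub $v_1$ of $\mathcal{H}_g$, $v_2^{(2)}$ and $v_1^{(3)}$ as $v_4$, $v_2^{(1)}$ and $v_1^{(2)}$ as $v_3$, and $v_2^{(3)}$ and $v_2^{(4)}$ as $v_2$; $\mathcal{H}_g^e$ is the union of the orientations of the four copies. (Equivalently, $\mathcal{H}_g$ arises from $\mathcal{H}_{g-1}$ by keeping each edge $\{u,v\}$ and adding two new adjacent vertices $w,w'$ with $w$ adjacent to $u$ and $w'$ adjacent to $v$.) All cycles are elementary. A cycle $C$ of a graph $G$ is nice if the subgraph of $G$ induced by the vertices not on $C$ has a perfect matching. An even cycle is oddly oriented if, traversing it in either direction,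 an odd number of its edges are oriented in the direction of traversal. An orientation is Pfaffian if every nice cycle is oddly oriented. *)

(* Defs.v *)
From mathcomp Require Import all_boot.
Set Implicit Arguments. Unset Strict Implicit. Unset Printing Implicit Defensive.

(* An oriented (simple) graph on natural-number vertex labels.
   - og_bound : every vertex label is < og_bound (used for relabelling copies)
   - og_verts : the vertex set
   - og_arcs  : the orientation: each edge {u,v} of the underlying graph is
                listed exactly once, as the arc (u,v) meaning u -> v
   - og_hubs  : the hub vertices (v1, v2, v3, v4) *)
Record ograph := OGraph {
  og_bound : nat;
  og_verts : seq nat;
  og_arcs  : seq (nat * nat);
  og_hubs  : nat * nat * nat * nat
}.

Definition hub1 (G : ograph) : nat := (og_hubs G).1.1.1.
Definition hub2 (G : ograph) : nat := (og_hubs G).1.1.2.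

(* H_1^e : hubs v1=0, v2=1, v3=2, v4=3;
   arcs v1->v2, v1->v3, v4->v2, v3->v4. *)
Definition H1 : ograph :=
  OGraph 4 [:: 0; 1; 2; 3] [:: (0, 1); (0, 2); (3, 1); (2, 3)] (0, 1, 2, 3).

(* Relabelling of vertex x of copy i (i = 0,1,2,3 stands for copies 1,2,3,4)
   of G = H_{g-1} (with h1 := v1, h2 := v2 of G, N := bound):
   copy i's vertex x gets label i*N + x, except for the identifications
     v1^(1) = v1^(4)          (label h1,       hub v1 of H_g)
     v2^(1) = v1^(2)          (label h2,       hub v3 of H_g)
     v2^(2) = v1^(3)          (label N + h2,   hub v4 of H_g)
     v2^(3) = v2^(4)          (label 2N + h2,  hub v2 of H_g). *)
Definition relab (G : ograph) (i x : nat) : nat :=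
  let N := og_bound G in
  let h1 := hub1 G in
  let h2 := hub2 G in
  match i with
  | 0 => x
  | 1 => if x == h1 then h2 else N + x
  | 2 => if x == h1 then N + h2 else 2 * N + x
  | _ => if x == h1 then h1 else if x == h2 then 2 * N + h2 else 3 * N + x
  end.

Definition relab_arc (G : ograph) (i : nat) (a : nat * nat) : nat * nat :=
  (relab G i a.1, relab G i a.2).

Definition Hstep (G : ograph) : ograph :=
  let N := og_bound G in
  let h2 := hub2 G in
  OGraph (4 * N)
    (undup (flatten [seq [seq relab G i x | x <- og_verts G] | i <- iota 0 4]))
    (flatten [seq [seq relab_arc G i a | a <- og_arcs G] | i <- iota 0 4])
    (hub1 G, 2 * N + h2, h2, N + h2).

(* H g = H_g with its orientation H_g^e, for g >= 1 (H 0 is unused). *)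
Definition H (g : nat) : ograph := iter g.-1 Hstep H1.

Definition adj (G : ograph) (x y : nat) : bool :=
  ((x, y) \in og_arcs G) || ((y, x) \in og_arcs G).

Definition is_cycle (G : ograph) (C : seq nat) : Prop :=
  [/\ 3 <= size C, uniq C, all (fun v => v \in og_verts G) C & cycle (adj G) C].

(* The subgraph induced by the vertices not on C has a perfect matching:
   a set M of edges with both ends off C covering every vertex off C
   exactly once. *)
Definition nice (G : ograph) (C : seq nat) : Prop :=
  is_cycle G C /\
  exists M : seq (nat * nat),
    all (fun e => [&& e \in og_arcs G, e.1 \notin C & e.2 \notin C]) M /\
    forall v, v \in og_verts G -> v \notin C ->
      count (fun e => (e.1 == v) || (e.2 == v)) M = 1.

Definition cyc_pairs (C : seq nat) : seq (nat * nat) := zip C (rot 1 C).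

(* Even cycle with an odd number of edges oriented along the traversal,
   in both directions of traversal. *)
Definition oddly_oriented (G : ograph) (C : seq nat) : Prop :=
  [/\ ~~ odd (size C),
      odd (count (fun p => p \in og_arcs G) (cyc_pairs C)) &
      odd (count (fun p => (p.2, p.1) \in og_arcs G) (cyc_pairs C))].

Definition pfaffian (G : ograph) : Prop :=
  forall C : seq nat, nice G C -> oddly_oriented G C.

(* Main.v *)
Require Import Defs.
From mathcomp Require Import all_boot zify.
Set Implicit Arguments. Unset Strict Implicit. Unset Printing Implicit Defensive.

Definition pairs (w : seq nat) : seq (nat * nat) := zip w (behead w).
Definition Fc (G : ograph) w := count (fun q => q \in og_arcs G) (pairs w).
Definition Bc (G : ograph) w := count (fun q => (q.2, q.1) \in og_arcs G) (pairs w).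

Lemma zip_take (S T : Type) n (s : seq S) (t : seq T) :
  take n (zip s t) = zip (take n s) (take n t).
Proof. by elim: n s t => [|n IH] [|x s] [|y t] //=; rewrite IH. Qed.

Lemma zip_drop (S T : Type) n (s : seq S) (t : seq T) :
  drop n (zip s t) = zip (drop n s) (drop n t).
Proof.
elim: n s t => [|n IH] [|x s] [|y t] //=; by case: (drop _ _).
Qed.

Lemma zip_rot (S T : Type) n (s : seq S) (t : seq T) : size s = size t ->
  zip (rot n s) (rot n t) = rot n (zip s t).
Proof.
move=> Hs; rewrite /rot zip_cat ?zip_take ?zip_drop //.
by rewrite !size_drop Hs.
Qed.

Lemma cyc_pairs_rot n C : cyc_pairs (rot n C) = rot n (cyc_pairs C).
Proof. by rewrite /cyc_pairs rot_rot zip_rot // size_rot. Qed.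

Lemma cyc_pairs_cons x s : cyc_pairs (x :: s) = pairs (x :: rcons s x).
Proof.
rewrite /cyc_pairs /pairs rot1_cons /= -cats1.
have -> : x :: s ++ [:: x] = (x :: s) ++ [:: x] by [].
by rewrite -[s ++ [:: x]]cats0 zip_cat ?cats0 // size_cat /= addn1.
Qed.

Lemma pairs_cat x p1 z p2 :
  pairs (x :: rcons p1 z ++ p2) = pairs (x :: rcons p1 z) ++ pairs (z :: p2).
Proof. by elim: p1 x => [|y p1 IH] x //=; rewrite /pairs /= in IH *; rewrite IH. Qed.

Lemma pairs_map (f : nat -> nat) w :
  pairs (map f w) = map (fun q => (f q.1, f q.2)) (pairs w).
Proof.
case: w => [|x w] //; rewrite /pairs /=.
by elim: w x => [|y w IH] x //=; rewrite IH.
Qed.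

Lemma mem_pairs w q : q \in pairs w -> (q.1 \in w) && (q.2 \in w).
Proof.
case: w => [|x w] //; rewrite /pairs /=.
elim: w x => [|y w IH] x //=; rewrite inE => /orP [/eqP -> | /IH]; rewrite /= !inE ?eqxx ?orbT //.
by case/andP => -> ->; rewrite !orbT.
Qed.

Lemma size_pairs x p : size (pairs (x :: p)) = size p.
Proof. rewrite /pairs /= size_zip /=; lia. Qed.

Fixpoint seqs n : seq (seq nat) :=
  if n is n'.+1 then [::] :: [seq a :: s | a <- iota 0 4, s <- seqs n'] else [:: [::]].

Lemma mem_seqs n s : size s <= n -> all (fun x => x < 4) s -> s \in seqs n.
Proof.
elim: n s => [|n IH] [|a s] //= Hs /andP [Ha Hall].
rewrite inE; apply/orP; right.
have Hm := IH s Hs Hall.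
by rewrite !mem_cat; case: a Ha => [|[|[|[|a]]]] // _; rewrite map_f ?orbT.
Qed.

Lemma size_le4 s : all (fun x => x < 4) s -> uniq s -> size s <= 4.
Proof.
move=> Ha Hu; have -> : 4 = size (iota 0 4) by [].
apply: uniq_leq_size => // x Hx; rewrite mem_iota /=.
by move/allP: Ha => /(_ x Hx).
Qed.

Definition check_c (s : seq nat) : bool :=
  (uniq s && (2 <= size s) && cycle (adj H1) s) ==>
  [&& ~~ odd (size s), odd (count (fun p => p \in og_arcs H1) (cyc_pairs s)) &
      odd (count (fun p => (p.2, p.1) \in og_arcs H1) (cyc_pairs s))].

Definition check_p (s : seq nat) : bool :=
  if s is x :: p then
    (uniq s && path (adj H1) x p && (x \in [:: 0; 1]) && (last x p \in [:: 0; 1]) && (x != last x p)) ==>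
    [&& odd (size p), odd (Fc H1 s) == (x == 0) & odd (Bc H1 s) == (x == 1)]
  else true.

Lemma check_all : all check_c (seqs 4) && all check_p (seqs 4).
Proof. by vm_compute. Qed.

Lemma H1_cyc s : all (fun x => x < 4) s -> uniq s -> 2 <= size s -> cycle (adj H1) s ->
  [/\ ~~ odd (size s), odd (count (fun p => p \in og_arcs H1) (cyc_pairs s)) &
      odd (count (fun p => (p.2, p.1) \in og_arcs H1) (cyc_pairs s))].
Proof.
move=> Ha Hu H2 Hc.
have /andP [/allP /(_ s) Hcs _] := check_all.
have := Hcs (mem_seqs (size_le4 Ha Hu) Ha); rewrite /check_c Hu H2 Hc /=.
by case/and3P.
Qed.

Lemma H1_path x p : all (fun x => x < 4) (x :: p) -> uniq (x :: p) -> path (adj H1) x p ->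
  x \in [:: 0; 1] -> last x p \in [:: 0; 1] -> x != last x p ->
  [/\ odd (size p), odd (Fc H1 (x :: p)) = (x == 0) & odd (Bc H1 (x :: p)) = (x == 1)].
Proof.
move=> Ha Hu Hp Hx Hl Hne.
have /andP [_ /allP /(_ (x :: p)) Hcs] := check_all.
have := Hcs (mem_seqs (size_le4 Ha Hu) Ha); rewrite /check_p Hu Hp Hx Hl Hne /=.
by case/and3P => -> /eqP -> /eqP ->.
Qed.

Definition rhubs (G : ograph) : seq nat :=
  [:: hub1 G; 2 * og_bound G + hub2 G; hub2 G; og_bound G + hub2 G].
Definition isH (G : ograph) (y : nat) : bool := y \in rhubs G.
Definition idx (G : ograph) (y : nat) : nat :=
  if y == hub1 G then 0 else if y == 2 * og_bound G + hub2 G then 1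
  else if y == hub2 G then 2 else 3.
Definition incopy (G : ograph) j y : bool := y \in [seq relab G j x | x <- og_verts G].
Definition unr (G : ograph) (j y : nat) : nat :=
  let N := og_bound G in let h1 := hub1 G in let h2 := hub2 G in
  match j with
  | 0 => y
  | 1 => if y == h2 then h1 else y - N
  | 2 => if y == N + h2 then h1 else y - 2 * N
  | _ => if y == h1 then h1 else if y == 2 * N + h2 then h2 else y - 3 * N
  end.
Definition sh (G : ograph) (j k : nat) : nat :=
  let N := og_bound G in let h1 := hub1 G in let h2 := hub2 G in
  if j + k == 1 then h2 else if (j + k == 3) && (j * k == 2) then N + h2
  else if j + k == 5 then 2 * N + h2 else h1.

Definition inv0 (G : ograph) : Prop :=
  [/\ all (fun x => x < og_bound G) (og_verts G),
      all (fun a => [&& a.1 \in og_verts G, a.2 \in og_verts G & a.1 != a.2]) (og_arcs G),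
      hub1 G < og_bound G, hub2 G < og_bound G & hub1 G != hub2 G].

Ltac brute := repeat (case: eqP => ? /=); lia.
Ltac pre G x := case: (x =P hub1 G) => ? /=; case: (x =P hub2 G) => ? /=.

Lemma relab_lt G j a : hub1 G < og_bound G -> hub2 G < og_bound G -> j < 4 -> a < og_bound G ->
  relab G j a < 4 * og_bound G.
Proof.
move=> h1N h2N; rewrite /relab /=; case: j => [|[|[|[|j]]]] //= _ aN; brute.
Qed.

Lemma relab_inj G j a b : hub1 G < og_bound G -> hub2 G < og_bound G -> hub1 G != hub2 G ->
  a < og_bound G -> b < og_bound G -> relab G j a = relab G j b -> a = b.
Proof.
move=> h1N h2N hne aN bN; rewrite /relab /=; case: j => [|[|[|j]]] //=; brute.
Qed.

Lemma unrK G j a : hub1 G < og_bound G -> hub2 G < og_bound G -> hub1 G != hub2 G ->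
  a < og_bound G -> unr G j (relab G j a) = a.
Proof.
move=> h1N h2N hne aN; rewrite /relab /unr /=; case: j => [|[|[|j]]] //=; pre G a; brute.
Qed.

Lemma share G j k a b : hub1 G < og_bound G -> hub2 G < og_bound G -> hub1 G != hub2 G ->
  j < 4 -> k < 4 -> j != k -> a < og_bound G -> b < og_bound G ->
  relab G j a = relab G k b -> relab G j a = sh G j k.
Proof.
move=> h1N h2N hne; rewrite /relab /sh /=.
case: j => [|[|[|[|j]]]] //; case: k => [|[|[|[|k]]]] //= _ _ _ aN bN; pre G a; pre G b; brute.
Qed.

Lemma share_hub G j k a b : hub1 G < og_bound G -> hub2 G < og_bound G -> hub1 G != hub2 G ->
  j < 4 -> k < 4 -> j != k -> a < og_bound G -> b < og_bound G ->
  relab G j a = relab G k b -> isH G (relab G j a).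
Proof.
move=> h1N h2N hne; rewrite /relab /isH /rhubs !inE /=.
case: j => [|[|[|[|j]]]] //; case: k => [|[|[|[|k]]]] //= _ _ _ aN bN; pre G a; pre G b; brute.
Qed.

Lemma hub_pre G j a : hub1 G < og_bound G -> hub2 G < og_bound G -> hub1 G != hub2 G ->
  a < og_bound G -> isH G (relab G j a) -> (a == hub1 G) || (a == hub2 G).
Proof.
move=> h1N h2N hne aN; rewrite /relab /isH /rhubs !inE /=.
case: j => [|[|[|j]]] //=; pre G a; brute.
Qed.

Lemma idx_lt4 G y : idx G y < 4.
Proof. by rewrite /idx; repeat case: ifP. Qed.

Lemma idx_inj G a b : hub1 G < og_bound G -> hub2 G < og_bound G -> hub1 G != hub2 G ->
  isH G a -> isH G b -> idx G a = idx G b -> a = b.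
Proof.
move=> h1N h2N hne; rewrite /isH /rhubs !inE /idx.
case/or4P => /eqP ->; case/or4P => /eqP ->; brute.
Qed.

Lemma idx_hub1 G : hub1 G < og_bound G -> hub2 G < og_bound G -> hub1 G != hub2 G ->
  idx G (hub1 G) = 0.
Proof. by move=> *; rewrite /idx eqxx. Qed.

Lemma idx_hub2' G : hub1 G < og_bound G -> hub2 G < og_bound G -> hub1 G != hub2 G ->
  idx G (2 * og_bound G + hub2 G) = 1.
Proof. move=> *; rewrite /idx; brute. Qed.

Lemma idx_vals G : hub1 G < og_bound G -> hub2 G < og_bound G -> hub1 G != hub2 G ->
  [/\ idx G (hub1 G) = 0, idx G (2 * og_bound G + hub2 G) = 1,
      idx G (hub2 G) = 2 & idx G (og_bound G + hub2 G) = 3].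
Proof. move=> *; rewrite /idx; split; brute. Qed.

Lemma relab_vals G : hub1 G < og_bound G -> hub2 G < og_bound G -> hub1 G != hub2 G ->
  relab G 0 (hub1 G) = hub1 G /\ relab G 0 (hub2 G) = hub2 G /\
      relab G 1 (hub1 G) = hub2 G /\ relab G 1 (hub2 G) = og_bound G + hub2 G /\
      relab G 2 (hub1 G) = og_bound G + hub2 G /\ relab G 2 (hub2 G) = 2 * og_bound G + hub2 G /\
      relab G 3 (hub1 G) = hub1 G /\ relab G 3 (hub2 G) = 2 * og_bound G + hub2 G.
Proof. move=> *; rewrite /relab /=; repeat split; brute. Qed.

Lemma idx_arc G j : hub1 G < og_bound G -> hub2 G < og_bound G -> hub1 G != hub2 G -> j < 4 ->
  [/\ isH G (relab G j (hub1 G)), isH G (relab G j (hub2 G)),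
      (idx G (relab G j (hub1 G)), idx G (relab G j (hub2 G))) \in og_arcs H1 &
      (idx G (relab G j (hub2 G)), idx G (relab G j (hub1 G))) \notin og_arcs H1].
Proof.
move=> h1N h2N hne.
have [i0 i1 i2 i3] := idx_vals h1N h2N hne.
have [r1 [r2 [r3 [r4 [r5 [r6 [r7 r8]]]]]]] := relab_vals h1N h2N hne.
have hh : forall y, y \in rhubs G -> isH G y by [].
case: j => [|[|[|[|j]]]] // _;
  rewrite ?r1 ?r2 ?r3 ?r4 ?r5 ?r6 ?r7 ?r8 ?i0 ?i1 ?i2 ?i3; split => //; apply: hh;
  by rewrite !inE eqxx ?orbT.
Qed.

Lemma arcs_stepP G q : q \in og_arcs (Hstep G) ->
  exists2 j, j < 4 & exists2 a, a \in og_arcs G & q = relab_arc G j a.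
Proof.
case/flattenP => s /mapP [j Hj ->] /mapP [a Ha ->].
by exists j; [rewrite mem_iota in Hj | exists a].
Qed.

Lemma arcs_step G j a : j < 4 -> a \in og_arcs G -> relab_arc G j a \in og_arcs (Hstep G).
Proof.
move=> Hj Ha; apply/flattenP; exists [seq relab_arc G j a | a <- og_arcs G]; last exact: map_f.
by apply/mapP; exists j; rewrite // mem_iota.
Qed.

Lemma verts_stepP G y : y \in og_verts (Hstep G) -> exists2 j, j < 4 & incopy G j y.
Proof.
rewrite mem_undup; case/flattenP => s /mapP [j Hj ->] Hy.
by exists j => //; rewrite mem_iota in Hj.
Qed.

Lemma verts_step G j a : j < 4 -> a \in og_verts G -> relab G j a \in og_verts (Hstep G).
Proof.
move=> Hj Ha; rewrite mem_undup; apply/flattenP; exists [seq relab G j x | x <- og_verts G]; last exact: map_f.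
by apply/mapP; exists j; rewrite // mem_iota.
Qed.

Lemma incopyP G j y : incopy G j y -> exists2 a, a \in og_verts G & y = relab G j a.
Proof. by case/mapP=> a Ha ->; exists a. Qed.

Lemma inv_vlt G a : inv0 G -> a \in og_verts G -> a < og_bound G.
Proof. by case=> /allP H _ _ _ _ /H. Qed.

Lemma inv_arc G q : inv0 G -> q \in og_arcs G -> [&& q.1 \in og_verts G, q.2 \in og_verts G & q.1 != q.2].
Proof. by case=> _ /allP H _ _ _ /H. Qed.

Lemma arc_tr G j a b : inv0 G -> j < 4 -> a < og_bound G -> b < og_bound G ->
  ((relab G j a, relab G j b) \in og_arcs (Hstep G)) = ((a, b) \in og_arcs G).
Proof.
move=> HG Hj aN bN; have [_ _ h1N h2N hne] := HG.
apply/idP/idP; last by move=> H; exact: (arcs_step Hj H).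
case/arcs_stepP => k Hk [[c d] Hcd [E1 E2]].
have /and3P [Hc Hd Hne] := inv_arc HG Hcd.
have cN := inv_vlt HG Hc; have dN := inv_vlt HG Hd.
case: (eqVneq j k) => [Ejk | Njk].
  subst k; move/relab_inj: E1 => -> //; move/relab_inj: E2 => -> //.
have S1 := share h1N h2N hne Hj Hk Njk aN cN E1.
have S2 := share h1N h2N hne Hj Hk Njk bN dN E2.
have Ecd : relab G k c = relab G k d by rewrite -E1 -E2 S1 S2.
by move/relab_inj: Ecd => /(_ h1N h2N hne cN dN) /= Ecd; rewrite Ecd eqxx in Hne.
Qed.

Lemma adj_tr G j a b : inv0 G -> j < 4 -> a < og_bound G -> b < og_bound G ->
  adj (Hstep G) (relab G j a) (relab G j b) = adj G a b.
Proof. by move=> HG Hj aN bN; rewrite /adj !arc_tr. Qed.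

Lemma adj_copy G x y : inv0 G -> adj (Hstep G) x y ->
  exists2 k, k < 4 & incopy G k x && incopy G k y.
Proof.
move=> HG; case/orP => /arcs_stepP [k Hk [[c d] Hcd [E1 E2]]];
  have /and3P [Hc Hd _] := inv_arc HG Hcd; exists k => //;
  by rewrite /incopy ?E1 ?E2 !map_f.
Qed.

Lemma nbr G j y w : inv0 G -> j < 4 -> incopy G j y -> ~~ isH G y ->
  adj (Hstep G) y w -> incopy G j w.
Proof.
move=> HG Hj Hy Hnh; have [_ _ h1N h2N hne] := HG.
case/incopyP: Hy => a Ha Ey.
case/orP => /arcs_stepP [k Hk [[c d] Hcd [E1 E2]]];
  have /and3P [Hc Hd _] := inv_arc HG Hcd;
  have aN := inv_vlt HG Ha; have cN := inv_vlt HG Hc; have dN := inv_vlt HG Hd.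
- case: (eqVneq j k) => [Ejk | Njk]; first by subst k; rewrite /incopy E2 map_f.
  have := share_hub h1N h2N hne Hj Hk Njk aN cN; rewrite -Ey E1 => /(_ erefl).
  by rewrite -E1 (negbTE Hnh).
- case: (eqVneq j k) => [Ejk | Njk]; first by subst k; rewrite /incopy E1 map_f.
  have := share_hub h1N h2N hne Hj Hk Njk aN dN; rewrite -Ey E2 => /(_ erefl).
  by rewrite -E2 (negbTE Hnh).
Qed.

Lemma chain G j x p : inv0 G -> j < 4 -> incopy G j x -> path (adj (Hstep G)) x p ->
  all (fun y => ~~ isH G y) (belast x p) -> all (incopy G j) p.
Proof.
move=> HG Hj; elim: p x => [|y p IH] x //= Hx /andP [Hxy Hp] /andP [Hnx Hb].
have Hy := nbr HG Hj Hx Hnx Hxy.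
by rewrite Hy (IH y).
Qed.

Definition Q1 (G : ograph) : Prop := forall C, is_cycle G C -> oddly_oriented G C.
Definition Q2 (G : ograph) : Prop := forall x p,
  uniq (x :: p) -> all (fun v => v \in og_verts G) (x :: p) -> path (adj G) x p ->
  x \in [:: hub1 G; hub2 G] -> last x p \in [:: hub1 G; hub2 G] -> x != last x p ->
  [/\ odd (size p), odd (Fc G (x :: p)) = (x == hub1 G) & odd (Bc G (x :: p)) = (x == hub2 G)].

Lemma proj G j s : inv0 G -> all (incopy G j) s ->
  map (relab G j) (map (unr G j) s) = s /\ all (fun v => v \in og_verts G) (map (unr G j) s).
Proof.
move=> HG; have [_ _ h1N h2N hne] := HG.
elim: s => [|y s IH] //= /andP [Hy /IH [-> ->]].
case/incopyP: Hy => a Ha ->; rewrite unrK // ?Ha //; exact: inv_vlt HG Ha.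
Qed.

Lemma all_lt G s : inv0 G -> all (fun v => v \in og_verts G) s -> all (fun v => v < og_bound G) s.
Proof. by move=> HG /allP H; apply/allP => v /H; apply: inv_vlt. Qed.

Lemma FB_tr G j w : inv0 G -> j < 4 -> all (fun v => v \in og_verts G) w ->
  Fc (Hstep G) (map (relab G j) w) = Fc G w /\ Bc (Hstep G) (map (relab G j) w) = Bc G w.
Proof.
move=> HG Hj Hw; rewrite /Fc /Bc pairs_map !count_map; split; apply: eq_in_count;
  move=> [a b] /mem_pairs /andP [Ha Hb] /=;
  have aN := inv_vlt HG (allP Hw a Ha); have bN := inv_vlt HG (allP Hw b Hb);
  by rewrite arc_tr.
Qed.

Lemma cyc_tr G j C : inv0 G -> j < 4 -> all (fun v => v \in og_verts G) C ->
  count (fun q => q \in og_arcs (Hstep G)) (cyc_pairs (map (relab G j) C)) =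
  count (fun q => q \in og_arcs G) (cyc_pairs C) /\
  count (fun q => (q.2, q.1) \in og_arcs (Hstep G)) (cyc_pairs (map (relab G j) C)) =
  count (fun q => (q.2, q.1) \in og_arcs G) (cyc_pairs C).
Proof.
move=> HG Hj; case: C => [|x s] // Hall.
rewrite map_cons !cyc_pairs_cons -map_rcons.
have Hall' : all (fun v => v \in og_verts G) (x :: rcons s x).
  apply/allP => v Hv; apply: (allP Hall); move: Hv.
  by rewrite !inE mem_rcons !inE; case/orP => [->|/orP [->|->]]; rewrite ?orbT.
have [E1 E2] := FB_tr HG Hj Hall'.
by split; [exact: E1 | exact: E2].
Qed.

Lemma caseA G j C : inv0 G -> Q1 G -> j < 4 -> is_cycle (Hstep G) C -> all (incopy G j) C ->
  oddly_oriented (Hstep G) C.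
Proof.
move=> HG HQ Hj [Hs Hu Ha Hc] Hin.
have [E Hv] := proj HG Hin.
move: Hv E; set C0 := map (unr G j) C => Hv E.
have Hlt := all_lt HG Hv.
have HC0 : is_cycle G C0.
  split => //.
  - by move: Hs; rewrite -E size_map.
  - by apply: (map_uniq (f := relab G j)); rewrite E.
  - rewrite -(mono_cycle_in (P := fun v => v < og_bound G) (f := relab G j) (e' := adj (Hstep G))) ?E //.
    by move=> a b aN bN; rewrite adj_tr.
have [Hev Hf Hb] := HQ C0 HC0.
have [E1 E2] := cyc_tr HG Hj Hv.
by rewrite /oddly_oriented -E size_map E1 E2; split.
Qed.

Lemma seg_one G x p1 z : inv0 G -> Q2 G -> isH G x -> isH G z -> x != z ->
  ~~ has (isH G) p1 -> uniq (rcons p1 z) -> path (adj (Hstep G)) x (rcons p1 z) ->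
  [/\ odd (size (rcons p1 z)),
      odd (Fc (Hstep G) (x :: rcons p1 z)) = ((idx G x, idx G z) \in og_arcs H1),
      odd (Bc (Hstep G) (x :: rcons p1 z)) = ((idx G z, idx G x) \in og_arcs H1) &
      adj H1 (idx G x) (idx G z)].
Proof.
move=> HG HQ Hx Hz Hxz Hp1 Hu Hp.
have [_ _ h1N h2N hne] := HG.
have [k Hk Hall] : exists2 k, k < 4 & all (incopy G k) (x :: rcons p1 z).
  case Eq: (rcons p1 z) => [|y r]; first by move/(congr1 size): Eq; rewrite size_rcons.
  rewrite Eq /= in Hp; case/andP: Hp => Hxy Hr.
  have [k Hk /andP [Hxk Hyk]] := adj_copy HG Hxy.
  exists k => //.
  have Hb : belast y r = p1.
    by move: Eq; rewrite lastI => /rcons_inj [->].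
  have := chain HG Hk Hyk Hr; rewrite Hb all_predC => /(_ Hp1) Hr'.
  by rewrite /= Hxk Hyk Hr'.
have [E Hv] := proj HG Hall.
move: Hv E; rewrite map_cons; set x0 := unr G k x; set p0 := map (unr G k) (rcons p1 z).
move=> Hv E.
have Hlt := all_lt HG Hv.
case: E => Ex Eq.
have Hl : relab G k (last x0 p0) = z by rewrite -last_map Ex Eq last_rcons.
have x0N : x0 < og_bound G by case/andP: Hlt.
have l0N : last x0 p0 < og_bound G by apply: (allP Hlt); exact: mem_last.
have Hx0 := hub_pre h1N h2N hne x0N (etrans (congr1 (isH G) Ex) Hx).
have Hl0 := hub_pre h1N h2N hne l0N (etrans (congr1 (isH G) Hl) Hz).
have Hne : x0 != last x0 p0.
  apply/negP => /eqP E0; have : x == z by rewrite -Ex -Hl -E0.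
  by rewrite (negbTE Hxz).
have Hux : uniq (x0 :: p0).
  apply: (map_uniq (f := relab G k)); rewrite /= Ex Eq /= Hu andbT mem_rcons inE negb_or Hxz /=.
  apply/negP => Hxp; have : has (isH G) p1 by apply/hasP; exists x.
  by rewrite (negbTE Hp1).
have Hpath : path (adj G) x0 p0.
  rewrite -(mono_path_in (P := fun v => v < og_bound G) (f := relab G k) (e' := adj (Hstep G))) //.
    by rewrite Ex Eq.
  by move=> a b aN bN; rewrite adj_tr.
have [Hsz Hf Hb] := HQ x0 p0 Hux Hv Hpath
  ltac:(by rewrite !inE) ltac:(by rewrite !inE) Hne.
have [F1 B1] := FB_tr HG Hk Hv.
rewrite /= Ex Eq in F1 B1.
have [I1 I2 I3 I4] := idx_arc h1N h2N hne Hk.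
have Hs : size (rcons p1 z) = size p0 by rewrite /p0 size_map.
rewrite F1 B1 Hs Hf Hb Hsz.
case/orP: Hx0 => /eqP E0.
- have E1 : last x0 p0 = hub2 G.
    by case/orP: Hl0 => /eqP // E1; rewrite E1 E0 eqxx in Hne.
  rewrite -Ex -Hl E1 E0 eqxx (negbTE I4) /adj I3 /=; split => //.
  exact: (negbTE hne).
- have E1 : last x0 p0 = hub1 G.
    by case/orP: Hl0 => /eqP // E1; rewrite E1 E0 eqxx in Hne.
  rewrite -Ex -Hl E1 E0 eqxx (negbTE I4) /adj I3 orbT; split => //.
  by rewrite eq_sym (negbTE hne).
Qed.

Lemma Fc_cons2 G a b t : Fc G [:: a, b & t] = ((a, b) \in og_arcs G) + Fc G (b :: t).
Proof. by []. Qed.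
Lemma Bc_cons2 G a b t : Bc G [:: a, b & t] = ((b, a) \in og_arcs G) + Bc G (b :: t).
Proof. by []. Qed.

Lemma seg G : inv0 G -> Q2 G -> forall p x, isH G x -> uniq p ->
  path (adj (Hstep G)) x p -> isH G (last x p) ->
  path (fun a b => a != b) x (filter (isH G) p) ->
  [/\ odd (size p) = odd (size (filter (isH G) p)),
      odd (Fc (Hstep G) (x :: p)) = odd (Fc H1 (map (idx G) (x :: filter (isH G) p))),
      odd (Bc (Hstep G) (x :: p)) = odd (Bc H1 (map (idx G) (x :: filter (isH G) p))) &
      path (adj H1) (idx G x) (map (idx G) (filter (isH G) p))].
Proof.
move=> HG HQ p; have [n] := ubnP (size p); elim: n p => [|n IH] p // Hn x Hx Hu Hp Hl Hd.
case: (boolP (has (isH G) p)) => Hh; last first.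
  case: p Hn Hu Hp Hl Hd Hh => [|y p']; first by [].
  move=> _ _ _ /= Hl _ Hh.
  by have := mem_last y p'; move/(@hasPn _ (isH G) (y :: p') Hh); rewrite Hl.
move: Hn Hu Hp Hl Hd; case/split_find: Hh => z p1 p2 Hz Hp1 Hn Hu Hp Hl Hd.
have Ef : filter (isH G) (rcons p1 z ++ p2) = z :: filter (isH G) p2.
  rewrite filter_cat filter_rcons Hz.
  have -> : filter (isH G) p1 = [::].
    by apply/eqP; move: Hp1; rewrite has_filter negbK.
  by [].
rewrite Ef in Hd *; case/andP: Hd => Hxz Hd2.
move: Hu; rewrite cat_uniq => /and3P [Hu1 _ Hu2].
move: Hp; rewrite cat_path last_rcons => /andP [Hp1' Hp2].
move: Hl; rewrite last_cat last_rcons => Hl2.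
have Hn2 : size p2 < n.
  move: Hn; rewrite size_cat size_rcons addSn ltnS => H.
  by apply: leq_ltn_trans H; exact: leq_addl.
have [S2 F2 B2 P2] := IH p2 Hn2 z Hz Hu2 Hp2 Hl2 Hd2.
have [S1 F1 B1 A1] := seg_one HG HQ Hx Hz Hxz Hp1 Hu1 Hp1'.
rewrite /= A1 P2; split => //.
- by rewrite size_cat oddD S1 S2.
- rewrite /Fc pairs_cat count_cat -/(Fc _ _) -/(Fc _ _) oddD F1 F2.
  have := Fc_cons2 H1 (idx G x) (idx G z) (map (idx G) (filter (isH G) p2)).
  by rewrite {1}/Fc => ->; rewrite oddD oddb.
- rewrite /Bc pairs_cat count_cat -/(Bc _ _) -/(Bc _ _) oddD B1 B2.
  have := Bc_cons2 H1 (idx G x) (idx G z) (map (idx G) (filter (isH G) p2)).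
  by rewrite {1}/Bc => ->; rewrite oddD oddb.
Qed.

Lemma hub1_step G : hub1 (Hstep G) = hub1 G. Proof. by []. Qed.
Lemma hub2_step G : hub2 (Hstep G) = 2 * og_bound G + hub2 G. Proof. by []. Qed.
Lemma bound_step G : og_bound (Hstep G) = 4 * og_bound G. Proof. by []. Qed.

Lemma uniq_path_neq (x : nat) s : uniq (x :: s) -> path (fun a b => a != b) x s.
Proof.
elim: s x => [|y s IH] x //= /andP [Hx /andP [Hy Hu]].
rewrite inE negb_or in Hx; case/andP: Hx => -> _ /=.
by apply: IH; rewrite /= Hy Hu.
Qed.

Lemma last_filter (P : pred nat) x p : P (last x p) -> last x (filter P p) = last x p.
Proof.
elim: p x => [|y p IH] x //= Hl.
case: ifP => Hy /=; first exact: IH.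
case: p IH Hl => [|w p] IH /= Hl; first by rewrite Hl in Hy.
by rewrite IH.
Qed.

Lemma count_rot (T : Type) (a : pred T) n s : count a (rot n s) = count a s.
Proof. by rewrite /rot count_cat addnC -count_cat cat_take_drop. Qed.

Lemma all_rot (T : Type) (a : pred T) n s : all a (rot n s) = all a s.
Proof. by rewrite /rot all_cat andbC -all_cat cat_take_drop. Qed.

Lemma is_cycle_rot G n C : is_cycle G C -> is_cycle G (rot n C).
Proof. by case=> H1 H2 H3 H4; split; rewrite ?size_rot ?rot_uniq ?all_rot ?rot_cycle. Qed.

Lemma odd_rot G n C : oddly_oriented G (rot n C) -> oddly_oriented G C.
Proof. by rewrite /oddly_oriented cyc_pairs_rot !count_rot size_rot. Qed.

Lemma inv_step G : inv0 G -> inv0 (Hstep G).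
Proof.
move=> HG; have [_ _ h1N h2N hne] := HG.
split; rewrite ?bound_step ?hub1_step ?hub2_step.
- apply/allP => y /verts_stepP [j Hj /incopyP [a Ha ->]].
  exact: relab_lt (inv_vlt HG Ha).
- apply/allP => q /arcs_stepP [j Hj [[a b] Hab ->]] /=.
  have /and3P [Ha Hb Hne] := inv_arc HG Hab.
  rewrite !verts_step //=; apply/negP => /eqP E.
  have aN := inv_vlt HG Ha; have bN := inv_vlt HG Hb.
  by rewrite (relab_inj h1N h2N hne aN bN E) eqxx in Hne.
- lia.
- lia.
- lia.
Qed.

Lemma isH_step1 G : isH G (hub1 G). Proof. by rewrite /isH /rhubs inE eqxx. Qed.
Lemma isH_step2 G : isH G (2 * og_bound G + hub2 G). Proof. by rewrite /isH /rhubs !inE eqxx orbT. Qed.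

Lemma idx01 G x : hub1 G < og_bound G -> hub2 G < og_bound G -> hub1 G != hub2 G ->
  x \in [:: hub1 G; 2 * og_bound G + hub2 G] ->
  (idx G x == 0) = (x == hub1 G) /\ (idx G x == 1) = (x == 2 * og_bound G + hub2 G).
Proof.
move=> h1N h2N hne; have [i0 i1 _ _] := idx_vals h1N h2N hne.
rewrite !inE => /orP [] /eqP ->; rewrite ?i0 ?i1 !eqxx; split => //; lia.
Qed.

Lemma Q2_step G : inv0 G -> Q2 G -> Q2 (Hstep G).
Proof.
move=> HG HQ x p Hu _ Hp; rewrite hub1_step hub2_step => Hx Hl Hne.
have [_ _ h1N h2N hne] := HG.
have [i0 i1 _ _] := idx_vals h1N h2N hne.
have hubs2 : forall y, y \in [:: hub1 G; 2 * og_bound G + hub2 G] -> isH G y.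
  by move=> y; rewrite !inE => /orP [] /eqP ->; rewrite ?isH_step1 ?isH_step2.
have Hxh := hubs2 x Hx; have Hlh := hubs2 _ Hl.
have Hup : uniq p by case/andP: Hu.
have Huf : uniq (x :: filter (isH G) p).
  by have := filter_uniq (isH G) Hu; rewrite /= Hxh.
have [S F B P] := seg HG HQ Hxh Hup Hp Hlh (uniq_path_neq Huf).
have Hinj : {in x :: filter (isH G) p &, injective (idx G)}.
  move=> a b Ha Hb; apply: idx_inj => //.
  - by move: Ha; rewrite inE mem_filter => /orP [/eqP -> | /andP []].
  - by move: Hb; rewrite inE mem_filter => /orP [/eqP -> | /andP []].
have Hidx : forall y, y \in [:: hub1 G; 2 * og_bound G + hub2 G] -> idx G y \in [:: 0; 1].
  by move=> y; rewrite !inE => /orP [] /eqP ->; rewrite ?i0 ?i1.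
have Hlast : last (idx G x) (map (idx G) (filter (isH G) p)) = idx G (last x p).
  by rewrite last_map last_filter.
have Hne' : idx G x != idx G (last x p).
  apply/negP => /eqP E; have E' := idx_inj h1N h2N hne Hxh Hlh E.
  by rewrite {1}E' eqxx in Hne.
have A4 : all (fun y => y < 4) (idx G x :: map (idx G) (filter (isH G) p)).
  by rewrite /= idx_lt4; apply/allP => y /mapP [w _ ->]; exact: idx_lt4.
have U4 : uniq (idx G x :: map (idx G) (filter (isH G) p)).
  by rewrite -map_cons (map_inj_in_uniq Hinj).
have L4 : last (idx G x) (map (idx G) (filter (isH G) p)) \in [:: 0; 1].
  by rewrite Hlast; exact: Hidx.
have N4 : idx G x != last (idx G x) (map (idx G) (filter (isH G) p)) by rewrite Hlast.
have [S' F' B'] := H1_path A4 U4 P (Hidx x Hx) L4 N4.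
have [Ex0 Ex1] := idx01 h1N h2N hne Hx.
split.
- by rewrite S -(size_map (idx G)).
- by rewrite F map_cons F' Ex0.
- by rewrite B map_cons B' Ex1.
Qed.

Lemma last_in (x : nat) s : s != [::] -> last x s \in s.
Proof. by case: s => [|y s] //= _; exact: mem_last. Qed.

Lemma caseB G z q : inv0 G -> Q1 G -> Q2 G -> is_cycle (Hstep G) (z :: q) -> isH G z ->
  oddly_oriented (Hstep G) (z :: q).
Proof.
move=> HG HQ1 HQ2 HC Hz; have [_ _ h1N h2N hne] := HG.
have HC' := HC; case: HC' => Hs Hu Ha Hc.
have Huz : uniq (z :: q) := Hu.
case/andP: Hu => Hzq Huq.
case: (boolP (has (isH G) q)) => Hh; last first.
  case: q Hs Hzq Huq Ha Hc Hh Huz HC => [|y q'] // _ _ _ Ha Hc Hh Huz HC.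
  have Hyv : y \in og_verts (Hstep G) by case/and3P: Ha.
  have [j Hj Hyj] := verts_stepP Hyv.
  move: Hc; rewrite /cycle /= => /andP [_ Hp].
  have Hb : all (fun y => ~~ isH G y) (belast y (rcons q' z)).
    by rewrite belast_rcons all_predC.
  have Hall := chain HG Hj Hyj Hp Hb.
  apply: (caseA HG HQ1 Hj HC).
  have Hzj : incopy G j z by move/allP: Hall; apply; rewrite mem_rcons inE eqxx.
  rewrite /= Hzj Hyj /=; apply/allP => w Hw; move/allP: Hall; apply.
  by rewrite mem_rcons inE Hw orbT.
set h := filter (isH G) q.
have Hhne : h != [::] by rewrite -has_filter.
have Hur : uniq (rcons q z) by rewrite rcons_uniq Hzq.
have Hpr : path (adj (Hstep G)) z (rcons q z) by [].
have Hlr : isH G (last z (rcons q z)) by rewrite last_rcons.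
have Ef : filter (isH G) (rcons q z) = rcons h z by rewrite filter_rcons Hz.
have Huh : uniq (z :: h) by have := filter_uniq (isH G) Huz; rewrite /= Hz.
have Hdr : path (fun a b => a != b) z (filter (isH G) (rcons q z)).
  rewrite Ef rcons_path (uniq_path_neq Huh) /=.
  case/andP: Huh => Hzn _.
  apply/negP => /eqP E; move: Hzn; rewrite -{1}E.
  by rewrite last_in.
have [S F B P] := seg HG HQ2 Hz Hur Hpr Hlr Hdr.
rewrite Ef in S F B P.
have Hinj : {in z :: h &, injective (idx G)}.
  move=> a b Ha' Hb'; apply: idx_inj => //.
  - by move: Ha'; rewrite inE mem_filter => /orP [/eqP -> | /andP []].
  - by move: Hb'; rewrite inE mem_filter => /orP [/eqP -> | /andP []].
set s := map (idx G) (z :: h).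
have A4 : all (fun y => y < 4) s by apply/allP => y /mapP [w _ ->]; exact: idx_lt4.
have U4 : uniq s by rewrite (map_inj_in_uniq Hinj).
have S4 : 2 <= size s by rewrite /s size_map; case: (h) Hhne.
have C4 : cycle (adj H1) s by rewrite /s map_cons /cycle -map_rcons.
have [Ev Of Ob] := H1_cyc A4 U4 S4 C4.
have Ecs : cyc_pairs s = pairs (map (idx G) (z :: rcons h z)).
  by rewrite /s map_cons cyc_pairs_cons map_cons map_rcons.
rewrite /oddly_oriented cyc_pairs_cons; split.
- have E1 : size (z :: q) = size (rcons q z) by rewrite size_rcons.
  have E2 : size (rcons h z) = size s by rewrite /s size_map size_rcons.
  by rewrite E1 S E2.
- by rewrite -/(Fc _ _) F /Fc -Ecs.
- by rewrite -/(Bc _ _) B /Bc -Ecs.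
Qed.

Lemma Q1_step G : inv0 G -> Q1 G -> Q2 G -> Q1 (Hstep G).
Proof.
move=> HG HQ1 HQ2 C HC.
case: (boolP (has (isH G) C)) => Hh.
  move: HC; case/split_find: Hh => z c1 c2 Hz _ HC.
  apply: (odd_rot (n := size c1)).
  have E : rot (size c1) (rcons c1 z ++ c2) = z :: (c2 ++ c1).
    by rewrite cat_rcons rot_size_cat.
  rewrite E; apply: caseB => //; rewrite -E; exact: is_cycle_rot.
case: C HC Hh => [|x s] HC Hh; first by case: HC.
have HC' := HC; case: HC' => _ _ Ha Hc.
have Hxv : x \in og_verts (Hstep G) by case/andP: Ha.
have [j Hj Hxj] := verts_stepP Hxv.
have Hb : all (fun y => ~~ isH G y) (belast x (rcons s x)).
  by rewrite belast_rcons all_predC.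
have Hall := chain HG Hj Hxj Hc Hb.
apply: (caseA HG HQ1 Hj HC).
rewrite /= Hxj /=; apply/allP => w Hw; move/allP: Hall; apply.
by rewrite mem_rcons inE Hw orbT.
Qed.

Lemma base : inv0 H1 /\ Q1 H1 /\ Q2 H1.
Proof.
have Hv : forall v, v \in og_verts H1 -> v < 4.
  by move=> v; rewrite !inE => /or4P [] /eqP ->.
split; first by split.
split.
- move=> C [Hs Hu Ha Hc].
  have A4 : all (fun y => y < 4) C by apply/allP => v /(allP Ha) /Hv.
  have [] := H1_cyc A4 Hu (leqW Hs) Hc.
  by split.
- move=> x p Hu Ha Hp Hx Hl Hne.
  have A4 : all (fun y => y < 4) (x :: p) by apply/allP => v /(allP Ha) /Hv.
  exact: H1_path A4 Hu Hp Hx Hl Hne.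
Qed.

Lemma all_inv n : let G := iter n Hstep H1 in inv0 G /\ Q1 G /\ Q2 G.
Proof.
elim: n => [|n [HG [H1' H2']]] /=; first exact: base.
split; first exact: inv_step.
split; [exact: Q1_step | exact: Q2_step].
Qed.

Theorem theorem3 (g : nat) : 1 <= g -> pfaffian (H g).
Proof.
move=> _ C [HC _]; rewrite /H in HC *.
by have [_ [HQ _]] := all_inv g.-1; apply: HQ.
Qed.
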